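(* Let $\mathfrak{H}$ be a fat indecomposable Hoffman graph with $\lambda_{\min}(\mathfrak{H})\ge-1-\tau$, where $\tau=\frac{1+\sqrt5}{2}$, and with at most two slim vertices. Then $\mathfrak{H}$ is isomorphic to one of $\mathfrak{H}_{\rm I}$, $\mathfrak{H}_{\rm II}$, $\mathfrak{H}_{\rm III}$, $\mathfrak{H}_{\rm IV}$, $\mathfrak{H}_{\rm XVI}$, $\mathfrak{H}_{\rm XVII}$.
   Context: A Hoffman graph $\mathfrak{H}$ is a finite simple graph $H$ together with a labeling of each vertex as slim or fat, such that every fat vertex is adjacent to at least one slim vertex and the fat vertices are pairwise non-adjacent. $V^s(\mathfrak{H})$ denotes the set of slim vertices and $N^f_{\mathfrak{H}}(x)$ the set of fat neighbours of $x$. $\mathfrak{H}$ is fat if every slim vertex has a fat neighbour. Isomorphisms are graph isomorphisms preserving labels. An induced Hoffman subgraph is a Hoffman graph whose underlying graph is an induced subgraph with inherited labels. Writing the adjacency matrix of $H$ with fat vertices last as $\begin{pmatrix}A_s & C\\ C^T & O\end{pmatrix}$, set $B(\mathfrak{H})=A_s-CC^T$; $\lambda_{\min}(\mathfrak{H})$ is its smallest eigenvalue. A decomposition of $\mathfrak{H}$ is a family $\{\mathfrak{H}^i\}_{i=1}^n$ of induced Hoffman subgraphs such that: (i) $V(\mathfrak{H})=\bigcup_i V(\mathfrak{H}^i)$; (ii) slim vertex sets of distinct members are disjoint; (iii) if $x\in V^s(\mathfrak{H}^i)$ and $y$ is a fat neighbour of $x$ in $\mathfrak{H}$, then $y\in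 V(\mathfrak{H}^i)$; (iv) if $x\in V^s(\mathfrak{H}^i)$, $y\in V^s(\mathfrak{H}^j)$, $i\neq j$, then $|N^f_{\mathfrak{H}}(x)\cap N^f_{\mathfrak{H}}(y)|\le 1$, with equality iff $x,y$ are adjacent. $\mathfrak{H}$ is indecomposable if it has no decomposition with $n\ge 2$. Named Hoffman graphs (slim vertices $v_i$, fat vertices $f_j$): $\mathfrak{H}_{\rm I}$: slim $v_1$, fat $f_1$, edge $v_1f_1$. $\mathfrak{H}_{\rm II}$: slim $v_1$, fat $f_1,f_2$, edges $v_1f_1,v_1f_2$. $\mathfrak{H}_{\rm III}$: slim $v_1,v_2$, fat $f_1$, edges $v_1f_1,v_2f_1$. $\mathfrak{H}_{\rm IV}$: slim $v_1,v_2$, fat $f_1,f_2$, edges $v_1v_2,v_1f_1,v_2f_2$. $\mathfrak{H}_{\rm XVI}$: slim $v_1,v_2$, fat $f_1,f_2,f_3$, edges $v_1v_2,v_1f_1,v_1f_2,v_2f_3$. $\mathfrak{H}_{\rm XVII}$: slim $v_1,v_2$, fat $f_1,f_2$, edges $v_1f_1,v_1f_2,v_2f_2$. *)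

(* Defs.v *)
From HB Require Import structures.
From mathcomp Require Import all_boot all_order all_algebra all_field.
Set Implicit Arguments. Unset Strict Implicit. Unset Printing Implicit Defensive.
Import Order.TTheory GRing.Theory Num.Theory.

Definition is_hoffman (T : finType) (adj : rel T) (fat : pred T) : Prop :=
  [/\ (forall x y, adj x y = adj y x),
      (forall x, ~~ adj x x),
      (forall x y, fat x -> fat y -> ~~ adj x y) &
      (forall f, fat f -> (exists2 x, ~~ fat x & adj f x))].

Definition is_fat_hoffman (T : finType) (adj : rel T) (fat : pred T) : Prop :=
  forall x, ~~ fat x -> exists2 f, fat f & adj x f.

Definition slim_set (T : finType) (fat : pred T) : {set T} := [set x | ~~ fat x].

Definition fat_nbrs (T : finType) (adj : rel T) (fat : pred T) (x : T) : {set T} :=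
  [set f | fat f && adj x f].

(* B(H) = A_s - C C^T, indexed by the slim vertices (enumerated) *)
Definition Bmat (T : finType) (adj : rel T) (fat : pred T) :
    'M[int]_(#|slim_set fat|) :=
  \matrix_(i, j)
    ((adj (enum_val i) (enum_val j) : nat)%:Z
     - (#|fat_nbrs adj fat (enum_val i) :&: fat_nbrs adj fat (enum_val j)|)%:Z)%R.

Definition tau : algC := ((1 + sqrtC 5%:R) / 2%:R)%R.

(* lambda_min(H) >= c : every eigenvalue of B(H) (as a complex matrix) is >= c *)
Definition lambda_min_ge (T : finType) (adj : rel T) (fat : pred T) (c : algC) : Prop :=
  forall a : algC, eigenvalue (map_mx intr (Bmat adj fat)) a -> (c <= a)%R.

(* A decomposition with n members, given by their vertex sets V i
   (each member is the induced Hoffman subgraph on V i). *)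
Definition is_decomposition (T : finType) (adj : rel T) (fat : pred T)
    (n : nat) (V : 'I_n -> {set T}) : Prop :=
  [/\
      (forall i, V i != set0),
      (forall i f, f \in V i -> fat f -> (exists2 x, (x \in V i) && ~~ fat x & adj f x)) /\
      (forall x, exists i, x \in V i),
      (forall i j x, i != j -> x \in V i -> ~~ fat x -> x \notin V j),
      (forall i x y, x \in V i -> ~~ fat x -> fat y -> adj x y -> y \in V i) &
      (forall i j x y, i != j -> x \in V i -> ~~ fat x -> y \in V j -> ~~ fat y ->
           (#|fat_nbrs adj fat x :&: fat_nbrs adj fat y| <= 1)%N /\
           ((#|fat_nbrs adj fat x :&: fat_nbrs adj fat y| == 1%N) = adj x y))].

Definition indecomposable (T : finType) (adj : rel T) (fat : pred T) : Prop :=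
  forall n (V : 'I_n -> {set T}), is_decomposition adj fat V -> (n < 2)%N.

Definition hoffman_iso (T1 : finType) (adj1 : rel T1) (fat1 : pred T1)
    (T2 : finType) (adj2 : rel T2) (fat2 : pred T2) : Prop :=
  exists f : T1 -> T2, [/\ bijective f,
     (forall x y, adj2 (f x) (f y) = adj1 x y) &
     (forall x, fat2 (f x) = fat1 x)].

(* Concrete Hoffman graph on 'I_k: vertices 0..ns-1 slim, ns..k-1 fat,
   edges given by a list of (unordered) pairs. *)
Definition named_adj (k : nat) (es : seq (nat * nat)) : rel 'I_k :=
  fun x y => ((val x, val y) \in es) || ((val y, val x) \in es).
Definition named_fat (k ns : nat) : pred 'I_k := fun x => (ns <= val x)%N.

(* slim v1 = 0, v2 = 1 (when present); fat f1, f2, f3 follow *)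
Definition es_I : seq (nat * nat) := [:: (0, 1)]%N.
Definition es_II : seq (nat * nat) := [:: (0, 1); (0, 2)]%N.
Definition es_III : seq (nat * nat) := [:: (0, 2); (1, 2)]%N.
Definition es_IV : seq (nat * nat) := [:: (0, 1); (0, 2); (1, 3)]%N.
Definition es_XVI : seq (nat * nat) := [:: (0, 1); (0, 2); (0, 3); (1, 4)]%N.
Definition es_XVII : seq (nat * nat) := [:: (0, 2); (0, 3); (1, 3)]%N.

Definition iso_named (T : finType) (adj : rel T) (fat : pred T)
    (k ns : nat) (es : seq (nat * nat)) : Prop :=
  hoffman_iso adj fat (@named_adj k es) (@named_fat k ns).

(* Main.v *)
Require Import Defs.
From HB Require Import structures.
From mathcomp Require Import all_boot all_order all_algebra all_field.
From mathcomp Require Import ring zify.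
Import Order.TTheory GRing.Theory Num.Theory.

Set Implicit Arguments. Unset Strict Implicit. Unset Printing Implicit Defensive.
Local Open Scope ring_scope.

Definition Bv (T : finType) (adj : rel T) (fat : pred T) (x y : T) : algC :=
  (((adj x y : nat)%:Z - (#|fat_nbrs adj fat x :&: fat_nbrs adj fat y|)%:Z)%R)%:~R.

Lemma eig_weights (T : finType) (adj : rel T) (fat : pred T) (w : T -> algC) lam :
  (exists2 x, ~~ fat x & w x != 0) ->
  (forall y, ~~ fat y -> \sum_(x in slim_set fat) w x * Bv adj fat x y = lam * w y) ->
  eigenvalue (map_mx intr (Bmat adj fat)) lam.
Proof.
move=> [x0 Hx0 Hw] H.
apply/eigenvalueP; exists (\row_j w (enum_val j)).
  apply/rowP => j; rewrite !mxE.
  have Hj : ~~ fat (enum_val j) by have := enum_valP j; rewrite inE.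
  have := H _ Hj; rewrite big_enum_val => <-.
  by apply: eq_bigr => i _; rewrite !mxE.
have Hx : x0 \in slim_set fat by rewrite inE.
apply/negP => /eqP/rowP/(_ (enum_rank_in Hx x0)); rewrite !mxE enum_rankK_in //.
by move/eqP; rewrite (negbTE Hw).
Qed.
Lemma tau_contra (lam : algC) (z : int) : (z <= -6)%R -> (- 1 - tau <= lam) ->
  2 * lam <= z%:~R -> False.
Proof.
move=> hz hl h2.
have h1 : 2 * (-1 - tau) <= (-6)%:~R.
  apply: le_trans (ler_wpM2l _ hl) _; first by rewrite ler0n.
  by apply: le_trans h2 _; rewrite ler_int.
have e : 2 * (-1 - tau) = - 3 - sqrtC 5 by rewrite /tau; field.
rewrite e -subr_ge0 in h1.
have e2 : (-6)%:~R - (- 3 - sqrtC 5) = sqrtC 5 - 3%:R :> algC.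
  rewrite -[(-6)%:~R]/(- (6%:R)); ring.
rewrite e2 subr_ge0 in h1.
have e3 : (3%:R : algC) = sqrtC (3%:R ^+ 2) by rewrite sqrCK // ler0n.
rewrite e3 ler_sqrtC ?qualifE /= ?ler0n ?exprn_ge0 // -natrX ler_nat in h1.
by [].
Qed.
Lemma eig2 (P Q R : int) : exists lam : algC,
 [/\ Q%:~R * P%:~R + (lam - P%:~R) * Q%:~R = lam * Q%:~R,
     Q%:~R * Q%:~R + (lam - P%:~R) * R%:~R = lam * (lam - P%:~R) &
     2 * lam <= (P + R - 2 * `|Q|)%:~R ].
Proof.
set p : algC := P%:~R; set q : algC := Q%:~R; set r : algC := R%:~R.
set Dz : int := (P - R) ^+ 2 + 4 * Q ^+ 2.
set s := sqrtC (Dz%:~R : algC).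
have hs : s ^+ 2 = (p - r) ^+ 2 + 4 * q ^+ 2.
  by rewrite sqrtCK /Dz rmorphD rmorphM rmorphXn /= rmorphXn /= rmorphB.
exists ((p + r - s) / 2); split.
- by field.
- apply/eqP; rewrite -subr_eq0.
  have -> : q * q + ((p + r - s) / 2 - p) * r - (p + r - s) / 2 * ((p + r - s) / 2 - p)
     = ((p - r) ^+ 2 + 4 * q ^+ 2 - s ^+ 2) / 4 by field.
  by rewrite hs subrr mul0r.
- have N0 : (0 : int) <= 2 * `|Q| by rewrite mulr_ge0.
  have hN : (2 * `|Q|) ^+ 2 <= Dz.
    rewrite /Dz exprMn real_normK ?num_real // lerDr.
    exact: sqr_ge0.
  have hN' : (2 * `|Q|)%:~R <= s.
    rewrite -[X in X <= _]sqrCK; last by rewrite ler0z.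
    rewrite ler_sqrtC ?qualifE /= ?exprn_ge0 ?ler0z //; last by apply: le_trans hN; rewrite exprn_ge0.
    by rewrite -rmorphXn /= ler_int.
  rewrite mulrC divfK ?pnatr_eq0 //.
  rewrite rmorphB /= rmorphD /= -/p -/r lerD2l lerN2.
  by [].
Qed.
Lemma iso_of_seq (T : finType) (adj : rel T) (fat : pred T) k ns es (s : seq T) (x0 : T) :
  size s = k -> uniq s -> (forall x, x \in s) ->
  (forall i j : 'I_k, named_adj es i j = adj (nth x0 s i) (nth x0 s j)) ->
  (forall i : 'I_k, named_fat ns i = fat (nth x0 s i)) ->
  iso_named adj fat k ns es.
Proof.
move=> Hsz Hu Hall Hadj Hfat.
have hf : forall x, (index x s < k)%N by move=> x; rewrite -Hsz index_mem.
have hn : forall x, nth x0 s (Ordinal (hf x)) = x by move=> x /=; rewrite nth_index.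
exists (fun x => Ordinal (hf x)); split.
- exists (fun i : 'I_k => nth x0 s i) => [x|i]; first exact: hn.
  by apply: val_inj => /=; rewrite index_uniq // Hsz.
- by move=> x y; rewrite Hadj !hn.
- by move=> x; rewrite Hfat hn.
Qed.

Lemma neq_fat (T : finType) (fat : pred T) x y : fat x -> ~~ fat y -> x != y.
Proof. by move=> hx hy; apply/eqP => E; move: hy; rewrite -E hx. Qed.
Lemma neq_fat' (T : finType) (fat : pred T) x y : ~~ fat x -> fat y -> x != y.
Proof. by move=> hx hy; apply/eqP => E; move: hx; rewrite E hy. Qed.
Lemma neq_adj (T : finType) (adj : rel T) x y : (forall z, ~~ adj z z) -> adj x y -> x != y.
Proof. by move=> hi hxy; apply/eqP => E; move: hxy; rewrite E (negbTE (hi y)). Qed.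

Ltac cl Hsym Hirr Hff :=
  match goal with
  | |- true = _ => symmetry; first [assumption | rewrite Hsym; assumption]
  | |- false = _ => symmetry; apply/negbTE;
       first [assumption | rewrite Hsym; assumption | apply: Hirr
             | apply: Hff; assumption]
  end.

Ltac neqs Hirr fat := first [ done | assumption | rewrite eq_sym; assumption
   | by apply: (neq_fat (fat:=fat)) | by apply: (neq_fat' (fat:=fat))
   | apply: neq_adj; [exact Hirr | assumption] ].

Ltac uniq_tac Hirr fat := rewrite /= !inE ?negb_or /= -?andbA; repeat (apply/andP; split); neqs Hirr fat.
Ltac adj_tac Hsym Hirr Hff := move=> [[|[|[|[|[|i]]]]] Hi] [[|[|[|[|[|j]]]]] Hj]; try by [];
    rewrite /named_adj; unfold es_I, es_II, es_III, es_IV, es_XVI, es_XVII; rewrite ?in_cons ?in_nil /=; cl Hsym Hirr Hff.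
Ltac fat_tac := move=> [[|[|[|[|[|i]]]]] Hi]; try by []; rewrite /named_fat /=;
  match goal with
  | H : is_true (~~ ?f ?x) |- _ = ?f ?x => by rewrite (negbTE H)
  end.

Lemma case_XVI (T : finType) (adj : rel T) (fat : pred T) u v f1 f2 g :
  is_hoffman adj fat ->
  (forall x, [\/ x = u, x = v, x \in fat_nbrs adj fat u | x \in fat_nbrs adj fat v]) ->
  ~~ fat u -> ~~ fat v -> adj u v ->
  fat_nbrs adj fat u = [set f1; f2] -> f1 != f2 ->
  fat_nbrs adj fat v = [set g] -> g \notin fat_nbrs adj fat u ->
  iso_named adj fat 5 2 es_XVI.
Proof.
move=> [Hsym Hirr Hff _] Hcov hu hv auv Nu f12 Nv gNu.
have : f1 \in fat_nbrs adj fat u by rewrite Nu !inE eqxx.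
rewrite inE => /andP[hf1 a1].
have : f2 \in fat_nbrs adj fat u by rewrite Nu !inE eqxx orbT.
rewrite inE => /andP[hf2 a2].
have : g \in fat_nbrs adj fat v by rewrite Nv !inE eqxx.
rewrite inE => /andP[hg a3].
have gf1 : g != f1 by apply: contra gNu => /eqP ->; rewrite Nu !inE eqxx.
have gf2 : g != f2 by apply: contra gNu => /eqP ->; rewrite Nu !inE eqxx orbT.
have b1 : ~~ adj v f1.
  apply/negP => a; have : f1 \in fat_nbrs adj fat v by rewrite inE hf1 a.
  by rewrite Nv inE eq_sym (negbTE gf1).
have b2 : ~~ adj v f2.
  apply/negP => a; have : f2 \in fat_nbrs adj fat v by rewrite inE hf2 a.
  by rewrite Nv inE eq_sym (negbTE gf2).
have b3 : ~~ adj u g.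
  by apply/negP => a; move: gNu; rewrite inE hg a.
apply: (@iso_of_seq _ _ _ _ _ _ [:: u; v; f1; f2; g] u).
- by [].
- uniq_tac Hirr fat.
- move=> x; case: (Hcov x) => [->|->|H|H]; rewrite ?inE ?eqxx ?orbT //.
    by move: H; rewrite Nu !inE => /orP[]/eqP ->; rewrite eqxx ?orbT.
  by move: H; rewrite Nv !inE => /eqP ->; rewrite eqxx ?orbT.
- adj_tac Hsym Hirr Hff.
- fat_tac.
Qed.

Lemma case_IV (T : finType) (adj : rel T) (fat : pred T) u v f1 g :
  is_hoffman adj fat ->
  (forall x, [\/ x = u, x = v, x \in fat_nbrs adj fat u | x \in fat_nbrs adj fat v]) ->
  ~~ fat u -> ~~ fat v -> adj u v ->
  fat_nbrs adj fat u = [set f1] ->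
  fat_nbrs adj fat v = [set g] -> g \notin fat_nbrs adj fat u ->
  iso_named adj fat 4 2 es_IV.
Proof.
move=> [Hsym Hirr Hff _] Hcov hu hv auv Nu Nv gNu.
have : f1 \in fat_nbrs adj fat u by rewrite Nu !inE eqxx.
rewrite inE => /andP[hf1 a1].
have : g \in fat_nbrs adj fat v by rewrite Nv !inE eqxx.
rewrite inE => /andP[hg a3].
have gf1 : g != f1 by apply: contra gNu => /eqP ->; rewrite Nu !inE eqxx.
have b1 : ~~ adj v f1.
  apply/negP => a; have : f1 \in fat_nbrs adj fat v by rewrite inE hf1 a.
  by rewrite Nv inE eq_sym (negbTE gf1).
have b3 : ~~ adj u g.
  by apply/negP => a; move: gNu; rewrite inE hg a.
apply: (@iso_of_seq _ _ _ _ _ _ [:: u; v; f1; g] u).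
- by [].
- uniq_tac Hirr fat.
- move=> x; case: (Hcov x) => [->|->|H|H]; rewrite ?inE ?eqxx ?orbT //.
    by move: H; rewrite Nu !inE => /eqP ->; rewrite eqxx ?orbT.
  by move: H; rewrite Nv !inE => /eqP ->; rewrite eqxx ?orbT.
- adj_tac Hsym Hirr Hff.
- fat_tac.
Qed.

Lemma case_XVII (T : finType) (adj : rel T) (fat : pred T) u v f1 g :
  is_hoffman adj fat ->
  (forall x, [\/ x = u, x = v, x \in fat_nbrs adj fat u | x \in fat_nbrs adj fat v]) ->
  ~~ fat u -> ~~ fat v -> u != v -> ~~ adj u v ->
  fat_nbrs adj fat u = [set f1; g] -> f1 != g ->
  fat_nbrs adj fat v = [set g] ->
  iso_named adj fat 4 2 es_XVII.
Proof.
move=> [Hsym Hirr Hff _] Hcov hu hv uv auv Nu f1g Nv.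
have : f1 \in fat_nbrs adj fat u by rewrite Nu !inE eqxx.
rewrite inE => /andP[hf1 a1].
have : g \in fat_nbrs adj fat u by rewrite Nu !inE eqxx orbT.
rewrite inE => /andP[hg a2].
have : g \in fat_nbrs adj fat v by rewrite Nv !inE eqxx.
rewrite inE => /andP[_ a3].
have b1 : ~~ adj v f1.
  apply/negP => a; have : f1 \in fat_nbrs adj fat v by rewrite inE hf1 a.
  by rewrite Nv inE (negbTE f1g).
apply: (@iso_of_seq _ _ _ _ _ _ [:: u; v; f1; g] u).
- by [].
- uniq_tac Hirr fat.
- move=> x; case: (Hcov x) => [->|->|H|H]; rewrite ?inE ?eqxx ?orbT //.
    by move: H; rewrite Nu !inE => /orP[]/eqP ->; rewrite eqxx ?orbT.
  by move: H; rewrite Nv !inE => /eqP ->; rewrite eqxx ?orbT.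
- adj_tac Hsym Hirr Hff.
- fat_tac.
Qed.

Lemma case_III (T : finType) (adj : rel T) (fat : pred T) u v f :
  is_hoffman adj fat ->
  (forall x, [\/ x = u, x = v, x \in fat_nbrs adj fat u | x \in fat_nbrs adj fat v]) ->
  ~~ fat u -> ~~ fat v -> u != v -> ~~ adj u v ->
  fat_nbrs adj fat u = [set f] -> fat_nbrs adj fat v = [set f] ->
  iso_named adj fat 3 2 es_III.
Proof.
move=> [Hsym Hirr Hff _] Hcov hu hv uv auv Nu Nv.
have : f \in fat_nbrs adj fat u by rewrite Nu !inE eqxx.
rewrite inE => /andP[hf a1].
have : f \in fat_nbrs adj fat v by rewrite Nv !inE eqxx.
rewrite inE => /andP[_ a3].
apply: (@iso_of_seq _ _ _ _ _ _ [:: u; v; f] u).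
- by [].
- uniq_tac Hirr fat.
- move=> x; case: (Hcov x) => [->|->|H|H]; rewrite ?inE ?eqxx ?orbT //.
    by move: H; rewrite Nu !inE => /eqP ->; rewrite eqxx ?orbT.
  by move: H; rewrite Nv !inE => /eqP ->; rewrite eqxx ?orbT.
- adj_tac Hsym Hirr Hff.
- fat_tac.
Qed.

Lemma case_I (T : finType) (adj : rel T) (fat : pred T) u f :
  is_hoffman adj fat ->
  (forall x, x = u \/ x \in fat_nbrs adj fat u) ->
  ~~ fat u -> fat_nbrs adj fat u = [set f] ->
  iso_named adj fat 2 1 es_I.
Proof.
move=> [Hsym Hirr Hff _] Hcov hu Nu.
have : f \in fat_nbrs adj fat u by rewrite Nu !inE eqxx.
rewrite inE => /andP[hf a1].
apply: (@iso_of_seq _ _ _ _ _ _ [:: u; f] u).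
- by [].
- uniq_tac Hirr fat.
- move=> x; case: (Hcov x) => [->|H]; rewrite ?inE ?eqxx ?orbT //.
  by move: H; rewrite Nu !inE => /eqP ->; rewrite eqxx ?orbT.
- adj_tac Hsym Hirr Hff.
- fat_tac.
Qed.

Lemma case_II (T : finType) (adj : rel T) (fat : pred T) u f1 f2 :
  is_hoffman adj fat ->
  (forall x, x = u \/ x \in fat_nbrs adj fat u) ->
  ~~ fat u -> fat_nbrs adj fat u = [set f1; f2] -> f1 != f2 ->
  iso_named adj fat 3 1 es_II.
Proof.
move=> [Hsym Hirr Hff _] Hcov hu Nu f12.
have : f1 \in fat_nbrs adj fat u by rewrite Nu !inE eqxx.
rewrite inE => /andP[hf1 a1].
have : f2 \in fat_nbrs adj fat u by rewrite Nu !inE eqxx orbT.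
rewrite inE => /andP[hf2 a2].
apply: (@iso_of_seq _ _ _ _ _ _ [:: u; f1; f2] u).
- by [].
- uniq_tac Hirr fat.
- move=> x; case: (Hcov x) => [->|H]; rewrite ?inE ?eqxx ?orbT //.
  by move: H; rewrite Nu !inE => /orP[]/eqP ->; rewrite eqxx ?orbT.
- adj_tac Hsym Hirr Hff.
- fat_tac.
Qed.
Lemma decomp2 (T : finType) (adj : rel T) (fat : pred T) u v :
  is_hoffman adj fat -> u != v -> ~~ fat u -> ~~ fat v ->
  (forall x, ~~ fat x -> x = u \/ x = v) ->
  (#|fat_nbrs adj fat u :&: fat_nbrs adj fat v| <= 1)%N ->
  ((#|fat_nbrs adj fat u :&: fat_nbrs adj fat v| == 1%N) = adj u v) ->
  is_decomposition adj fat
    (fun i : 'I_2 => if val i == 0%N then u |: fat_nbrs adj fat u else v |: fat_nbrs adj fat v).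
Proof.
move=> [Hsym Hirr Hff Hfs] uv hu hv Hsl Hc1 Hc2.
have inV : forall w x, x \in w |: fat_nbrs adj fat w = (x == w) || (fat x && adj w x).
  by move=> w x; rewrite !inE.
have slimV : forall w x, ~~ fat w -> ~~ fat x -> x \in w |: fat_nbrs adj fat w -> x = w.
  by move=> w x hw hx; rewrite inV (negbTE hx) /= orbF => /eqP.
split.
- move=> [[|[|i]] Hi] //=; apply/set0Pn.
    by exists u; rewrite inV eqxx.
  by exists v; rewrite inV eqxx.
- split.
    move=> [[|[|i]] Hi] f //=; rewrite inV => /orP[/eqP ->|/andP[hf a]] hf'.
    + by move: hf'; rewrite (negbTE hu).
    + by exists u; [rewrite inV eqxx | rewrite Hsym].
    + by move: hf'; rewrite (negbTE hv).
    + by exists v; [rewrite inV eqxx | rewrite Hsym].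
  move=> x; case hx: (fat x).
    have [y hy axy] := Hfs x hx.
    case: (Hsl y hy) => Ey; subst y.
      by exists (Ordinal (isT : (0 < 2)%N)); rewrite /= inV hx Hsym axy orbT.
    by exists (Ordinal (isT : (1 < 2)%N)); rewrite /= inV hx Hsym axy orbT.
  case: (Hsl x (negbT hx)) => ->.
    by exists (Ordinal (isT : (0 < 2)%N)); rewrite /= inV eqxx.
  by exists (Ordinal (isT : (1 < 2)%N)); rewrite /= inV eqxx.
- move=> [[|[|i]] Hi] [[|[|j]] Hj] x //= _ Hx hx.
    rewrite (slimV _ _ hu hx Hx) inV negb_or (negbTE hu) /= andbT.
    by [].
  by rewrite (slimV _ _ hv hx Hx) inV negb_or (negbTE hv) /= andbT eq_sym.
- move=> [[|[|i]] Hi] x y //= Hx hx hy axy.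
    by rewrite (slimV _ _ hu hx Hx) in axy; rewrite inV hy axy orbT.
  by rewrite (slimV _ _ hv hx Hx) in axy; rewrite inV hy axy orbT.
- move=> [[|[|i]] Hi] [[|[|j]] Hj] x y //= _ Hx hx Hy hy.
    by rewrite (slimV _ _ hu hx Hx) (slimV _ _ hv hy Hy).
  rewrite (slimV _ _ hv hx Hx) (slimV _ _ hu hy Hy) setIC Hsym; by [].
Qed.

Lemma setI_1 (T : finType) (A : {set T}) g :
  A :&: [set g] = if g \in A then [set g] else set0.
Proof.
apply/setP => x; rewrite !inE; case: (x =P g) => [->|ne]; case: ifP => H; rewrite ?inE ?andbF ?andbT ?eqxx ?H //.
by apply/esym/eqP.
Qed.

Lemma two_slim (T : finType) (adj : rel T) (fat : pred T) u v :
  is_hoffman adj fat ->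
  (forall x, [\/ x = u, x = v, x \in fat_nbrs adj fat u | x \in fat_nbrs adj fat v]) ->
  ~~ fat u -> ~~ fat v -> u != v ->
  (1 <= #|fat_nbrs adj fat v|)%N -> (#|fat_nbrs adj fat v| <= #|fat_nbrs adj fat u|)%N ->
  (#|fat_nbrs adj fat u| + #|fat_nbrs adj fat v| <= 3)%N ->
  ~~ ((#|fat_nbrs adj fat u :&: fat_nbrs adj fat v| <= 1)%N &&
      ((#|fat_nbrs adj fat u :&: fat_nbrs adj fat v| == 1%N) == adj u v)) ->
  iso_named adj fat 3 2 es_III \/
  iso_named adj fat 4 2 es_IV \/
  iso_named adj fat 5 2 es_XVI \/
  iso_named adj fat 4 2 es_XVII.
Proof.
move=> Hh Hcov hu hv uv r1 rp pr3 hdec.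
have r1' : #|fat_nbrs adj fat v| == 1%N by apply/eqP; lia.
have [g Nv] := cards1P r1'.
rewrite Nv setI_1 in hdec.
have p12 : (#|fat_nbrs adj fat u| == 1%N) || (#|fat_nbrs adj fat u| == 2%N).
  by apply/orP; lia.
case gNu : (g \in fat_nbrs adj fat u) in hdec; rewrite ?cards1 ?cards0 /= in hdec.
- have e : adj u v = false by move: hdec; case: (adj u v).
  case/orP: p12 => [/cards1P [f Nu] | /cards2P [f1 [f2 [f12 Nu]]]].
    have Ef : f = g by move: gNu; rewrite Nu inE => /eqP.
    left; apply: (case_III (f := g) Hh Hcov hu hv uv) => //.
    by rewrite Nu Ef.
  do 3 right.
  move: gNu; rewrite Nu !inE => /orP[] /eqP Eg.
    apply: (case_XVII (f1 := f2) (g := g) Hh Hcov hu hv uv) => //.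
      by rewrite Nu Eg setUC.
    by rewrite Eg eq_sym.
  apply: (case_XVII (f1 := f1) (g := g) Hh Hcov hu hv uv) => //.
    by rewrite Nu Eg.
  by rewrite Eg.
- have e : adj u v = true by move: hdec; case: (adj u v).
  case/orP: p12 => [/cards1P [f Nu] | /cards2P [f1 [f2 [f12 Nu]]]].
    right; left; apply: (case_IV (f1 := f) (g := g) Hh Hcov hu hv) => //; by rewrite ?e ?gNu.
  do 2 right; left; apply: (case_XVI (f1 := f1) (f2 := f2) (g := g) Hh Hcov hu hv) => //; by rewrite ?e ?gNu.
Qed.

Theorem mainTheorem15 (T : finType) (adj : rel T) (fat : pred T) :
  (0 < #|T|)%N ->
  is_hoffman adj fat ->
  is_fat_hoffman adj fat ->
  indecomposable adj fat ->
  lambda_min_ge adj fat (- 1 - tau)%R ->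
  (#|slim_set fat| <= 2)%N ->
  iso_named adj fat 2 1 es_I \/
  iso_named adj fat 3 1 es_II \/
  iso_named adj fat 3 2 es_III \/
  iso_named adj fat 4 2 es_IV \/
  iso_named adj fat 5 2 es_XVI \/
  iso_named adj fat 4 2 es_XVII.
Proof.
move=> HT Hh Hfat Hind Hlam Hcard.
have [Hsym Hirr Hff Hfs] := Hh.
have [x0 hx0] : exists x, ~~ fat x.
  case/card_gt0P: HT => x _; case hx: (fat x); last by exists x; rewrite hx.
  have [y hy _] := Hfs x hx; by exists y.
have S0 : (0 < #|slim_set fat|)%N by apply/card_gt0P; exists x0; rewrite inE.
have Bvd : forall x, Bv adj fat x x = ((- (#|fat_nbrs adj fat x|)%:Z)%R)%:~R.
  by move=> x; rewrite /Bv (negbTE (Hirr x)) setIid /= sub0r.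
have Bvs : forall x y, Bv adj fat x y = Bv adj fat y x.
  by move=> x y; rewrite /Bv Hsym setIC.
have Nfat : forall x, ~~ fat x -> (1 <= #|fat_nbrs adj fat x|)%N.
  move=> x hx; have [f hf axf] := Hfat x hx.
  by apply/card_gt0P; exists f; rewrite inE hf axf.
have [/cards1P [u HS] | /cards2P [u [v [uv HS]]]] :
    (#|slim_set fat| == 1%N) \/ (#|slim_set fat| == 2%N).
  by move: S0 Hcard; case: #|slim_set fat| => [|[|[|]]] //; auto.
-
  have : u \in slim_set fat by rewrite HS inE.
  rewrite inE => hu.
  have Hsl : forall x, ~~ fat x -> x = u by move=> x hx; apply/set1P; rewrite -HS inE.
  have Hcov : forall x, x = u \/ x \in fat_nbrs adj fat u.
    move=> x; case hx: (fat x); last by left; apply: Hsl; rewrite hx.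
    have [y hy axy] := Hfs x hx; right; rewrite inE hx /= Hsym -(Hsl y hy); exact: axy.
  set k := #|fat_nbrs adj fat u|.
  have k3 : (k <= 2)%N.
    rewrite leqNgt; apply/negP => hk.
    have Heig : eigenvalue (map_mx intr (Bmat adj fat)) (Bv adj fat u u).
      apply: (eig_weights (w := fun _ => 1)); first by exists u; rewrite ?oner_eq0.
      by move=> y hy; rewrite HS big_set1 (Hsl y hy) mul1r mulr1.
    apply: (@tau_contra (Bv adj fat u u) (2 * - (k%:Z))) (Hlam _ Heig) _.
      lia.
    by rewrite Bvd rmorphM.
  have k1 := Nfat u hu.
  have : (k == 1%N) || (k == 2%N) by apply/orP; lia.
  case/orP => [/cards1P [f Nu] | /cards2P [f1 [f2 [f12 Nu]]]].
    by left; apply: (case_I Hh Hcov hu Nu).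
  by right; left; apply: (case_II Hh Hcov hu Nu f12).
- have : u \in slim_set fat by rewrite HS !inE eqxx.
  rewrite inE => hu.
  have : v \in slim_set fat by rewrite HS !inE eqxx orbT.
  rewrite inE => hv.
  have Hsl : forall x, ~~ fat x -> x = u \/ x = v.
    by move=> x hx; apply/set2P; rewrite -HS inE.
  have Hcov : forall x, [\/ x = u, x = v, x \in fat_nbrs adj fat u | x \in fat_nbrs adj fat v].
    move=> x; case hx: (fat x); last by case: (Hsl x); rewrite ?hx // => ->; [apply: Or41 | apply: Or42].
    have [y hy axy] := Hfs x hx; case: (Hsl y hy) => Ey; subst y.
      by apply: Or43; rewrite inE hx Hsym.
    by apply: Or44; rewrite inE hx Hsym.
  have Hcov' : forall x, [\/ x = v, x = u, x \in fat_nbrs adj fat v | x \in fat_nbrs adj fat u].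
    by move=> x; case: (Hcov x); [apply: Or42 | apply: Or41 | apply: Or44 | apply: Or43].
  set p := #|fat_nbrs adj fat u|; set r := #|fat_nbrs adj fat v|.
  set c := #|fat_nbrs adj fat u :&: fat_nbrs adj fat v|.
  have hdec : ~~ ((c <= 1)%N && ((c == 1%N) == adj u v)).
    apply/negP => /andP[h1 /eqP h2].
    by have := Hind _ _ (decomp2 Hh uv hu hv Hsl h1 h2).
  have hQ : ((adj u v : nat)%:Z - c%:Z) != 0.
    move: hdec; clearbody c; case: (adj u v); case: c => [|[|c']] //= _; lia.
  set Q : int := ((adj u v : nat)%:Z - c%:Z) in hQ *.
  have [lam [E1 E2 E3]] := eig2 (- p%:Z) Q (- r%:Z).
  have Heig : eigenvalue (map_mx intr (Bmat adj fat)) lam.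
    apply: (eig_weights (w := fun x => if x == u then Q%:~R else lam - (- p%:Z)%:~R)).
      by exists u => //; rewrite eqxx intr_eq0.
    have vu : (v == u) = false by apply/negbTE; rewrite eq_sym.
    have Buv : Bv adj fat u v = Q%:~R by [].
    move=> y hy; rewrite HS big_setU1 ?big_set1 /=; last by rewrite inE.
    case: (Hsl y hy) => ->; rewrite eqxx vu.
      by rewrite (Bvs v u) Buv Bvd -/p.
    by rewrite Buv Bvd -/r.
  have key : ~ (- p%:Z + - r%:Z - 2 * `|Q| <= -6)%R.
    by move=> h; apply: (tau_contra h (Hlam _ Heig) E3).
  have Q1 : 1 <= `|Q| by lia.
  have pr3 : (p + r <= 3)%N by lia.
  have hp := Nfat u hu; have hr := Nfat v hv.
  case: (leqP r p) => hrp.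
    by have := two_slim Hh Hcov hu hv uv hr hrp pr3 hdec; tauto.
  have vu : v != u by rewrite eq_sym.
  have hdec' : ~~ ((#|fat_nbrs adj fat v :&: fat_nbrs adj fat u| <= 1)%N &&
      ((#|fat_nbrs adj fat v :&: fat_nbrs adj fat u| == 1%N) == adj v u)).
    by rewrite setIC Hsym.
  have pr3' : (r + p <= 3)%N by lia.
  by have := two_slim Hh Hcov' hv hu vu hp (ltnW hrp) pr3' hdec'; tauto.
Qed.
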